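(* Let $\lambda\in P_I^+$ and $\mu\in P$ with $\mu<_\emptyset\lambda$. Then $w\mu<_\emptyset\lambda$ for every $w\in W_{I,\lambda}$.
   Context: Let $\mathfrak a$ be a Euclidean space with inner product $(\cdot,\cdot)$, $R\subset\mathfrak a^*$ a root system with Weyl group $W$, positive roots $R^+$, simple roots $\Pi$, simple reflections $S$, and Bruhat order $\le_W$ on $W$. Let $P$ be the weight lattice, $P^+$ the dominant weights, and $Q^+=\{\sum_{\alpha\in\Pi}n_\alpha\alpha: n_\alpha\in\mathbb Z_{\ge0}\}$; write $\lambda\preceq\mu$ iff $\mu-\lambda\in Q^+$. For $\lambda\in P$ let $\lambda_+$ be the unique element of $W\lambda\cap P^+$ and $\overline v(\lambda)$ the minimal length element of $W$ with $\overline v(\lambda)\lambda_+=\lambda$. Define a partial order on $P$: $\lambda\le_\emptyset\mu$ iff $\lambda_+\preceq\mu_+$ and, in case $\lambda_+=\mu_+$, $\overline v(\lambda)\le_W\overline v(\mu)$; $\lambda<_\emptyset\mu$ means $\lambda\le_\emptyset\mu$ and $\lambda\neq\mu$. Let $I\subset S$, $W_I$ the parabolic subgroup generated by $I$, $R_I^+$ its positive roots, $P_I^+=\{\lambda\in P:(\lambda,\alpha)\ge0\ \forall\alpha\in R_I^+\}$, and for $\lambda\in P_I^+$ let $W_{I,\lambda}=\{w\in W_I: w\lambda=\lambda\}$. *)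

(* Defs.v *)
From HB Require Import structures.
From mathcomp Require Import all_boot all_order all_algebra.
From mathcomp Require Import reals.
From Stdlib Require Import Relations ClassicalEpsilon.
Set Implicit Arguments. Unset Strict Implicit. Unset Printing Implicit Defensive.
Import Order.TTheory GRing.Theory Num.Theory.
Local Open Scope ring_scope.

(* The Euclidean space a is modelled as R^n (column vectors 'cV[R]_n) with the
   standard inner product; a^* is identified with a via the inner product.
   Elements of W act on the left as n x n matrices. *)
Section RootData.
Context {R : realType} {n l : nat}.

Definition dot (u v : 'cV[R]_n) : R := (u^T *m v) 0 0.

Definition refl (a : 'cV[R]_n) : 'M[R]_n := 1%:M - (2 / dot a a) *: (a *m a^T).

Definition prodr (s : seq 'cV[R]_n) : 'M[R]_n :=
  foldr (fun a M => refl a *m M) 1%:M s.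

(* crystallographic root system spanning R^n (not assumed reduced) *)
Definition root_system (Rt : seq 'cV[R]_n) : Prop :=
  [/\ (0 \notin Rt),
      (forall a b, a \in Rt -> b \in Rt -> refl a *m b \in Rt),
      (forall a b, a \in Rt -> b \in Rt -> 2 * dot b a / dot a a \is a Num.int) &
      (forall v : 'cV[R]_n, exists c : 'I_(size Rt) -> R,
          v = \sum_(i < size Rt) c i *: Rt`_i)].

Definition base (Rt : seq 'cV[R]_n) (Pi : 'I_l -> 'cV[R]_n) : Prop :=
  [/\ (forall i, Pi i \in Rt),
      (forall c : 'I_l -> R, \sum_i c i *: Pi i = 0 -> forall i, c i = 0) &
      (forall b, b \in Rt -> exists c : 'I_l -> int,
          ((forall i, 0 <= c i) \/ (forall i, c i <= 0)) /\
          b = \sum_i (c i)%:~R *: Pi i)].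

Variables (Rt : seq 'cV[R]_n) (Pi : 'I_l -> 'cV[R]_n).

Definition posroot (a : 'cV[R]_n) : Prop :=
  a \in Rt /\ exists c : 'I_l -> nat, a = \sum_i (c i)%:R *: Pi i.

Definition posrootI (I : {set 'I_l}) (a : 'cV[R]_n) : Prop :=
  a \in Rt /\ exists c : 'I_l -> nat,
    (forall i, i \notin I -> c i = 0) /\ a = \sum_i (c i)%:R *: Pi i.

Definition inW (w : 'M[R]_n) : Prop :=
  exists2 s : seq 'cV[R]_n, all (fun a => a \in Rt) s & w = prodr s.

Definition inWI (I : {set 'I_l}) (w : 'M[R]_n) : Prop :=
  exists2 s : seq 'I_l, all (fun i => i \in I) s & w = prodr (map Pi s).

Definition length_is (w : 'M[R]_n) (k : nat) : Prop :=
  (exists s : seq 'I_l, size s = k /\ w = prodr (map Pi s)) /\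
  (forall s : seq 'I_l, w = prodr (map Pi s) -> (k <= size s)%N).

Definition bruhat_step (u w : 'M[R]_n) : Prop :=
  exists a, a \in Rt /\ w = refl a *m u /\
    exists ku kw, [/\ length_is u ku, length_is w kw & (ku < kw)%N].

Definition bruhat_le : relation 'M[R]_n := clos_refl_trans _ bruhat_step.

Definition weight (lam : 'cV[R]_n) : Prop :=
  forall a, a \in Rt -> 2 * dot lam a / dot a a \is a Num.int.

Definition dominant (lam : 'cV[R]_n) : Prop :=
  weight lam /\ forall a, posroot a -> 0 <= dot lam a.

Definition Qle (lam mu : 'cV[R]_n) : Prop :=
  exists c : 'I_l -> nat, mu - lam = \sum_i (c i)%:R *: Pi i.

Definition is_plus (lam nu : 'cV[R]_n) : Prop :=
  dominant nu /\ exists2 w, inW w & w *m lam = nu.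

(* lam_+ : the (unique) element of W lam \cap P^+ *)
Definition lam_plus (lam : 'cV[R]_n) : 'cV[R]_n :=
  epsilon (inhabits 0) (is_plus lam).

Definition is_vbar (lam : 'cV[R]_n) (v : 'M[R]_n) : Prop :=
  [/\ inW v, v *m lam_plus lam = lam &
      exists k, length_is v k /\
        forall w, inW w -> w *m lam_plus lam = lam ->
          forall m, length_is w m -> (k <= m)%N].

Definition vbar (lam : 'cV[R]_n) : 'M[R]_n :=
  epsilon (inhabits 1%:M) (is_vbar lam).

Definition le0 (lam mu : 'cV[R]_n) : Prop :=
  Qle (lam_plus lam) (lam_plus mu) /\
  (lam_plus lam = lam_plus mu -> bruhat_le (vbar lam) (vbar mu)).

Definition lt0 (lam mu : 'cV[R]_n) : Prop := le0 lam mu /\ lam <> mu.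

Definition PIplus (I : {set 'I_l}) (lam : 'cV[R]_n) : Prop :=
  weight lam /\ forall a, posrootI I a -> 0 <= dot lam a.

End RootData.

(* Main.v *)
Require Import Defs.
From HB Require Import structures.
From mathcomp Require Import all_boot all_order all_algebra.
From mathcomp Require Import reals.
From mathcomp Require Import ring lra.
From mathcomp Require Import zify.
From Stdlib Require Import Relations ClassicalEpsilon Classical FunctionalExtensionality PropExtensionality.
Set Implicit Arguments. Unset Strict Implicit. Unset Printing Implicit Defensive.
Import Order.TTheory GRing.Theory Num.Theory.
Local Open Scope ring_scope.



Section MatrixFacts.
Variables (R : realType) (n : nat).
Implicit Types (u v a b : 'cV[R]_n) (M A B : 'M[R]_n).

Lemma dotE u v : dot u v = \sum_i u i 0 * v i 0.
Proof. by rewrite /dot !mxE; apply: eq_bigr => i _; rewrite !mxE. Qed.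

Lemma dotC u v : dot u v = dot v u.
Proof. by rewrite !dotE; apply: eq_bigr => i _; rewrite mulrC. Qed.

Lemma dotDl u v b : dot (u + v) b = dot u b + dot v b.
Proof. by rewrite !dotE -big_split; apply: eq_bigr => i _; rewrite mxE mulrDl. Qed.

Lemma dotDr u v b : dot b (u + v) = dot b u + dot b v.
Proof. by rewrite !(dotC b) dotDl. Qed.

Lemma dotZl c u v : dot (c *: u) v = c * dot u v.
Proof. by rewrite !dotE mulr_sumr; apply: eq_bigr => i _; rewrite mxE mulrA. Qed.

Lemma dotZr c u v : dot v (c *: u) = c * dot v u.
Proof. by rewrite !(dotC v) dotZl. Qed.

Lemma dotNl u v : dot (- u) v = - dot u v.
Proof. by rewrite -scaleN1r dotZl mulN1r. Qed.

Lemma dotNr u v : dot v (- u) = - dot v u.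
Proof. by rewrite !(dotC v) dotNl. Qed.

Lemma dotBl u v b : dot (u - v) b = dot u b - dot v b.
Proof. by rewrite dotDl dotNl. Qed.

Lemma dotBr u v b : dot b (u - v) = dot b u - dot b v.
Proof. by rewrite dotDr dotNr. Qed.

Lemma dot0l u : dot 0 u = 0.
Proof. by rewrite -(scale0r 0) dotZl mul0r. Qed.

Lemma dot0r u : dot u 0 = 0.
Proof. by rewrite dotC dot0l. Qed.

Lemma dot_suml (I : finType) (F : I -> 'cV[R]_n) v :
  dot (\sum_i F i) v = \sum_i dot (F i) v.
Proof.
elim/big_rec2: _ => [|i x y _ <-]; first by rewrite dot0l.
by rewrite dotDl.
Qed.

Lemma dot_sumr (I : finType) (F : I -> 'cV[R]_n) v :
  dot v (\sum_i F i) = \sum_i dot v (F i).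
Proof. by rewrite dotC dot_suml; apply: eq_bigr => i _; rewrite dotC. Qed.

Lemma dot_ge0 u : 0 <= dot u u.
Proof. by rewrite dotE; apply: sumr_ge0 => i _; rewrite -expr2 sqr_ge0. Qed.

Lemma dot_eq0 u : dot u u = 0 -> u = 0.
Proof.
rewrite dotE => H; apply/matrixP => i j; rewrite ord1 mxE.
have H2 := psumr_eq0P (P := xpredT) (F := fun k => u k 0 * u k 0)
  (fun k _ => (le_trans (lexx 0) (sqr_ge0 (u k 0)))) H (i:=i) isT.
by move/eqP: H2; rewrite mulf_eq0 orbb => /eqP.
Qed.

Lemma dot_gt0 u : u != 0 -> 0 < dot u u.
Proof.
move=> nz; rewrite lt_def dot_ge0 andbT; apply/eqP => /dot_eq0 H.
by rewrite H eqxx in nz.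
Qed.

Lemma dotMl M u v : dot (M *m u) v = dot u (M^T *m v).
Proof. by rewrite /dot trmx_mul mulmxA. Qed.

Lemma dotMr M u v : dot u (M *m v) = dot (M^T *m u) v.
Proof. by rewrite dotMl trmxK. Qed.

Lemma mx_ext A B : (forall v : 'cV[R]_n, A *m v = B *m v) -> A = B.
Proof.
move=> H; apply/matrixP => i j.
have := congr1 (fun M : 'cV[R]_n => M i 0) (H (delta_mx j 0)).
by rewrite -!colE !mxE.
Qed.

Lemma reflE a v : refl a *m v = v - (2 / dot a a * dot a v) *: a.
Proof.
rewrite /refl mulmxBl mul1mx -scalemxAl -mulmxA.
rewrite [a^T *m v]mx11_scalar mul_mx_scalar scalerA.
by congr (_ - _ *: _); rewrite /dot.
Qed.

Lemma refl_root a : a != 0 -> refl a *m a = - a.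
Proof.
move=> nz; rewrite reflE.
have d0 : dot a a != 0 by rewrite gt_eqF // dot_gt0.
rewrite mulrAC -mulrA divff // mulr1 -[X in X - _]scale1r -scalerBl.
by rewrite -[2]/(1 + 1) opprD addrA subrr add0r scaleN1r.
Qed.

Lemma refl_orth_fix a v : dot a v = 0 -> refl a *m v = v.
Proof. by move=> H; rewrite reflE H mulr0 scale0r subr0. Qed.

Lemma reflK a : a != 0 -> refl a *m refl a = 1%:M.
Proof.
move=> nz; apply: mx_ext => v; rewrite -mulmxA mul1mx.
have d0 : dot a a != 0 by rewrite gt_eqF // dot_gt0.
rewrite (reflE a v) reflE dotBr dotZr.
set k := 2 / dot a a.
rewrite -addrA -opprD -scalerDl.
have -> : k * dot a v + k * (dot a v - k * dot a v * dot a a) = 0.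
  by rewrite /k; field.
by rewrite scale0r subr0.
Qed.

Lemma refl_tr a : (refl a)^T = refl a.
Proof.
apply: mx_ext => v; rewrite reflE.
rewrite /refl linearB /= trmx1 linearZ /= trmx_mul trmxK.
by rewrite -/(refl a) reflE.
Qed.

Definition orth M := M^T *m M = 1%:M.

Lemma orthC M : orth M -> M *m M^T = 1%:M.
Proof. by move=> H; apply: mulmx1C. Qed.

Lemma orth1 : orth 1%:M.
Proof. by rewrite /orth trmx1 mul1mx. Qed.

Lemma orthM A B : orth A -> orth B -> orth (A *m B).
Proof.
move=> HA HB; rewrite /orth trmx_mul mulmxA -(mulmxA _ _ A) HA mulmx1 HB //.
Qed.

Lemma orth_refl a : a != 0 -> orth (refl a).
Proof. by move=> nz; rewrite /orth refl_tr reflK. Qed.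

Lemma orth_tr M : orth M -> orth M^T.
Proof. by move=> H; rewrite /orth trmxK orthC. Qed.

Lemma orth_dot M u v : orth M -> dot (M *m u) (M *m v) = dot u v.
Proof. by move=> H; rewrite dotMl mulmxA H mul1mx. Qed.

Lemma refl_conj M a : orth M -> refl (M *m a) = M *m refl a *m M^T.
Proof.
move=> H; apply: mx_ext => v.
rewrite -!mulmxA (reflE (M *m a)) (reflE a) mulmxBr mulmxA orthC // mul1mx.
by rewrite orth_dot // -scalemxAr dotMl.
Qed.

Lemma reflZ c a : c != 0 -> refl (c *: a) = refl a.
Proof.
move=> c0; apply: mx_ext => v.
have [->|nz] := eqVneq a 0; first by rewrite scaler0.
have d0 : dot a a != 0 by rewrite gt_eqF // dot_gt0.
rewrite !reflE !dotZl !dotZr scalerA; congr (_ - _ *: _).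
by field; rewrite d0 c0.
Qed.

Lemma reflN a : refl (- a) = refl a.
Proof. by rewrite -scaleN1r reflZ // oppr_eq0 oner_eq0. Qed.

End MatrixFacts.



Definition pb (P : Prop) : bool := if excluded_middle_informative P then true else false.
Lemma pbP (P : Prop) : reflect P (pb P).
Proof. by rewrite /pb; case: excluded_middle_informative => H; constructor. Qed.

Section Roots.
Variables (R : realType) (n l : nat) (Rt : seq 'cV[R]_n) (Pi : 'I_l -> 'cV[R]_n).
Hypothesis Hrs : root_system Rt.
Hypothesis Hb : base Rt Pi.

Definition pw (w : seq 'I_l) : 'M[R]_n := prodr (map Pi w).
Local Notation s i := (refl (Pi i)).
Local Notation pos := (posroot Rt Pi).

Lemma root_nz a : a \in Rt -> a != 0.
Proof. by case: Hrs => H0 _ _ _ Ha; apply/eqP => E; move: Ha; rewrite E => Ha; rewrite Ha in H0. Qed.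

Lemma Pi_in i : Pi i \in Rt.
Proof. by case: Hb. Qed.

Lemma Pi_nz i : Pi i != 0.
Proof. exact: root_nz (Pi_in i). Qed.

Lemma refl_in a b : a \in Rt -> b \in Rt -> refl a *m b \in Rt.
Proof. by case: Hrs => _ H _ _; apply: H. Qed.

Lemma pw_nil : pw [::] = 1%:M.
Proof. by []. Qed.

Lemma pw_cons i w : pw (i :: w) = s i *m pw w.
Proof. by []. Qed.

Lemma pw_cat w1 w2 : pw (w1 ++ w2) = pw w1 *m pw w2.
Proof.
elim: w1 => [|i w1 IH]; first by rewrite /= pw_nil mul1mx.
by rewrite cat_cons !pw_cons IH mulmxA.
Qed.

Lemma pw_rcons w i : pw (rcons w i) = pw w *m s i.
Proof. by rewrite -cats1 pw_cat pw_cons pw_nil mulmx1. Qed.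

Lemma orth_s i : orth (s i).
Proof. exact: orth_refl (Pi_nz i). Qed.

Lemma sK i : s i *m s i = 1%:M.
Proof. exact: reflK (Pi_nz i). Qed.

Lemma orth_pw w : orth (pw w).
Proof.
elim: w => [|i w IH]; first exact: orth1.
by rewrite pw_cons; apply: orthM => //; apply: orth_s.
Qed.

Lemma pw_tr w : (pw w)^T = pw (rev w).
Proof.
elim: w => [|i w IH]; first by rewrite /= trmx1.
by rewrite pw_cons trmx_mul IH refl_tr rev_cons pw_rcons.
Qed.

Lemma pw_trK w : (pw w)^T *m pw w = 1%:M.
Proof. exact: orth_pw. Qed.

Lemma pw_trK' w : pw w *m (pw w)^T = 1%:M.
Proof. exact: orthC (orth_pw w). Qed.

Lemma pw_root w b : b \in Rt -> pw w *m b \in Rt.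
Proof.
elim: w => [|i w IH] Hb'; first by rewrite pw_nil mul1mx.
by rewrite pw_cons -mulmxA; apply: refl_in; [apply: Pi_in| apply: IH].
Qed.

Lemma indep (c : 'I_l -> R) : \sum_i c i *: Pi i = 0 -> forall i, c i = 0.
Proof. by case: Hb => _ H _; apply: H. Qed.

Lemma coef_unique (c d : 'I_l -> R) :
  \sum_i c i *: Pi i = \sum_i d i *: Pi i -> forall i, c i = d i.
Proof.
move=> E i; apply/eqP; rewrite -subr_eq0; apply/eqP; move: i; apply: indep.
by rewrite (eq_bigr (fun i => c i *: Pi i - d i *: Pi i)) ?sumrB ?E ?subrr //
  => i _; rewrite scalerBl.
Qed.

Lemma sum_delta (i : 'I_l) (k : R) :
  \sum_j (if j == i then k else 0) *: Pi j = k *: Pi i.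
Proof.
rewrite (bigD1 i) //= eqxx big1 ?addr0 // => j /negPf ->; exact: scale0r.
Qed.

Lemma pos_in a : pos a -> a \in Rt.
Proof. by case. Qed.

Lemma pos_Pi i : pos (Pi i).
Proof.
split; first exact: Pi_in.
exists (fun j => (j == i)%N : nat).
rewrite -[LHS]scale1r -sum_delta; apply: eq_bigr => j _.
by case: eqP.
Qed.

Lemma root_sign a : a \in Rt -> pos a \/ pos (- a).
Proof.
move=> Ha; case: Hb => _ _ /(_ a Ha) [c [[Hc|Hc] E]].
  left; split => //; exists (fun i => absz (c i)).
  rewrite E; apply: eq_bigr => i _; congr (_ *: _).
  have -> : (absz (c i))%:R = ((absz (c i))%:Z)%:~R :> R by [].
  by rewrite abszE ger0_norm ?Hc.
right; split; first by have := refl_in Ha Ha; rewrite refl_root ?root_nz.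
exists (fun i => absz (c i)).
rewrite E -sumrN; apply: eq_bigr => i _; rewrite -scaleNr; congr (_ *: _).
have -> : (absz (c i))%:R = ((absz (c i))%:Z)%:~R :> R by [].
by rewrite abszE ler0_norm ?Hc // mulrNz.
Qed.

Lemma pos_neg a : pos a -> pos (- a) -> False.
Proof.
move=> [Ha [c Ec]] [_ [d Ed]].
have H : forall i, (c i + d i)%:R = 0 :> R.
  apply: indep.
  rewrite (eq_bigr (fun i => (c i)%:R *: Pi i + (d i)%:R *: Pi i)); last first.
    by move=> i _; rewrite natrD scalerDl.
  by rewrite big_split /= -Ec -Ed subrr.
have: a = 0.
  rewrite Ec big1 // => i _.
  have /eqP := H i; rewrite pnatr_eq0 addn_eq0 => /andP [/eqP -> _].
  by rewrite scale0r.
by move/eqP; rewrite (negPf (root_nz Ha)).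
Qed.


Lemma R1c (i : 'I_l) (b : 'cV[R]_n) : pos b -> pos (- (s i *m b)) ->
  exists2 c : R, c != 0 & b = c *: Pi i.
Proof.
move=> [Hb' [c Ec]] [_ [d Ed]].
set k := 2 / dot (Pi i) (Pi i) * dot (Pi i) b.
have E1 : s i *m b = b - k *: Pi i by rewrite reflE.
have H : forall j, ((c j + d j)%:R : R) = (if j == i then k else 0).
  apply: coef_unique; rewrite sum_delta.
  rewrite (eq_bigr (fun j => (c j)%:R *: Pi j + (d j)%:R *: Pi j)); last first.
    by move=> j _; rewrite natrD scalerDl.
  by rewrite big_split /= -Ec -Ed E1 opprB addrC subrK.
have Hc : forall j, j != i -> c j = 0.
  move=> j /negPf ji; have /eqP := H j.
  by rewrite ji pnatr_eq0 addn_eq0 => /andP [/eqP -> _].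
have Eb : b = (c i)%:R *: Pi i.
  by rewrite Ec (bigD1 i) //= big1 ?addr0 // => j ji; rewrite Hc // scale0r.
have ci0 : (c i)%:R != 0 :> R.
  by apply/eqP => E0; move: (root_nz Hb'); rewrite Eb E0 scale0r eqxx.
by exists (c i)%:R.
Qed.

Lemma R1 (i : 'I_l) (b : 'cV[R]_n) : pos b -> pos (- (s i *m b)) -> refl b = s i.
Proof. by move=> H1 H2; have [c c0 ->] := R1c H1 H2; rewrite reflZ. Qed.

Definition expressible (y : 'M[R]_n) := exists w, y = pw w.

Lemma refl_expr b : pos b -> expressible (refl b).
Proof.
move=> [Hb' [c Ec]].
suff: forall h (b : 'cV[R]_n) (c : 'I_l -> nat), b \in Rt ->
    b = \sum_i (c i)%:R *: Pi i -> (\sum_i c i <= h)%N -> expressible (refl b).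
  by move/(_ _ b c Hb' Ec (leqnn _)).
move=> {Hb' Ec c b}; elim=> [|h IH] b c Hb' Ec Hh.
  have : b = 0.
    rewrite Ec big1 // => i _.
    have : (c i <= 0)%N by apply: leq_trans Hh; rewrite (bigD1 i) //= leq_addr.
    by rewrite leqn0 => /eqP ->; rewrite scale0r.
  by move/eqP; rewrite (negPf (root_nz Hb')).
have bpos : 0 < dot b b := dot_gt0 (root_nz Hb').
have [j Hj] : exists j, 0 < (c j)%:R * dot (Pi j) b.
  case: (pickP (fun j => 0 < (c j)%:R * dot (Pi j) b)) => [j Hj|H0]; first by exists j.
  exfalso; have : dot b b <= 0.
    rewrite {1}Ec dot_suml; apply: sumr_le0 => j _.
    by rewrite dotZl leNgt H0.
  by rewrite leNgt bpos.
have cj : (0 < c j)%N.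
  by rewrite lt0n; apply/eqP => E; rewrite E mul0r ltxx in Hj.
have dj : 0 < dot (Pi j) b by move: Hj; rewrite pmulr_rgt0 // ltr0n.
have Hsb : s j *m b \in Rt := refl_in (Pi_in j) Hb'.
have E2 : refl (s j *m b) = s j *m refl b *m s j.
  by rewrite refl_conj ?refl_tr //; apply: orth_s.
case: (root_sign Hsb) => [Hp|Hn]; last first.
  rewrite (R1 (conj Hb' (ex_intro _ c Ec)) Hn).
  by exists [:: j]; rewrite pw_cons pw_nil mulmx1.
case: Hp => _ [c' Ec'].
set k := 2 / dot (Pi j) (Pi j) * dot (Pi j) b.
have kpos : 0 < k.
  by rewrite /k; apply: mulr_gt0 => //; apply: divr_gt0 => //; exact: dot_gt0 (Pi_nz j).
have H : forall m, ((c' m)%:R : R) = (c m)%:R - (if m == j then k else 0).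
  apply: coef_unique; rewrite -Ec'.
  rewrite (eq_bigr (fun m => (c m)%:R *: Pi m - (if m == j then k else 0) *: Pi m));
    last by move=> m _; rewrite scalerBl.
  by rewrite sumrB sum_delta -Ec reflE.
have Hsum : (\sum_m c' m < \sum_m c m)%N.
  rewrite -(ltr_nat R) !natr_sum.
  have -> : \sum_m ((c' m)%:R : R) = \sum_m ((c m)%:R - (if m == j then k else 0)).
    by apply: eq_bigr => m _; apply: H.
  rewrite sumrB.
  have -> : \sum_m (if m == j then k else 0) = k.
    rewrite (bigD1 j) //= eqxx big1 ?addr0 // => m /negPf -> //.
  lra.
have [w Ew] := IH _ c' Hsb Ec' (leq_trans Hsum Hh).
exists (j :: rcons w j); rewrite pw_cons pw_rcons -Ew E2 !mulmxA sK mul1mx.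
by rewrite -mulmxA sK mulmx1.
Qed.

Lemma refl_expr_root a : a \in Rt -> expressible (refl a).
Proof.
move=> Ha; case: (root_sign Ha) => H; first exact: refl_expr.
by rewrite -reflN; apply: refl_expr.
Qed.

Lemma expr_mul y z : expressible y -> expressible z -> expressible (y *m z).
Proof. by move=> [w1 ->] [w2 ->]; exists (w1 ++ w2); rewrite pw_cat. Qed.

Lemma expr_pw w : expressible (pw w).
Proof. by exists w. Qed.

Lemma expr_tr y : expressible y -> expressible y^T.
Proof. by move=> [w ->]; rewrite pw_tr; apply: expr_pw. Qed.

Lemma inW_expr y : inW Rt y -> expressible y.
Proof.
move=> [ss Hall ->]; elim: ss Hall => [|a ss IH] /=; first by exists [::].
move=> /andP [Ha Hall]; apply: expr_mul; last exact: IH.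
exact: refl_expr_root.
Qed.

Lemma expr_inW y : expressible y -> inW Rt y.
Proof.
move=> [w ->]; exists (map Pi w) => //.
by apply/allP => a /mapP [i _ ->]; apply: Pi_in.
Qed.

Lemma expr_orth y : expressible y -> orth y.
Proof. by move=> [w ->]; apply: orth_pw. Qed.

End Roots.



Section Lengths.
Variables (R : realType) (n l : nat) (Rt : seq 'cV[R]_n) (Pi : 'I_l -> 'cV[R]_n).
Hypothesis Hrs : root_system Rt.
Hypothesis Hb : base Rt Pi.
Local Notation s i := (refl (Pi i)).
Local Notation pos := (posroot Rt Pi).
Local Notation pw := (pw Pi).
Local Notation expressible := (expressible Pi).
Local Notation sK := (sK Hrs Hb).
Local Notation root_sign := (root_sign Hrs Hb).
Local Notation pos_neg := (pos_neg Hrs Hb).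
Local Notation R1 := (R1 Hrs Hb).
Local Notation Pi_in := (Pi_in Hb).
Local Notation orth_s := (orth_s Hrs Hb).
Local Notation refl_in := (refl_in Hrs).
Local Notation root_nz := (root_nz Hrs).
Local Notation refl_expr := (refl_expr Hrs Hb).
Local Notation refl_expr_root := (refl_expr_root Hrs Hb).
Local Notation pos_Pi := (pos_Pi Hb).
Local Notation pw_root := (pw_root Hrs Hb).
Local Notation expr_pw := (expr_pw Pi).
Local Notation orth_pw := (orth_pw Hrs Hb).
Local Notation pw_trK := (pw_trK Hrs Hb).
Local Notation expr_orth := (expr_orth Hrs Hb).
Local Notation expr_inW := (expr_inW Hb).
Local Notation inW_expr := (inW_expr Hrs Hb).
Local Notation coef_unique := (coef_unique Hb).

Definition lenpred (y : 'M[R]_n) (k : nat) : bool :=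
  pb (exists w, size w = k /\ y = pw w) || ~~ pb (expressible y).

Lemma lenpred_ex y : exists k, lenpred y k.
Proof.
case: (pbP (expressible y)) => [[w Ew]|H].
  by exists (size w); apply/orP; left; apply/pbP; exists w.
by exists 0%N; apply/orP; right; apply/negP => /pbP.
Qed.

Definition len y := ex_minn (lenpred_ex y).

Lemma len_spec y : expressible y -> exists w, size w = len y /\ y = pw w.
Proof.
move=> Hy; rewrite /len; case: ex_minnP => m Hm _.
by case/orP: Hm => [/pbP //|/negP H]; exfalso; apply: H; apply/pbP.
Qed.

Lemma len_min y w : y = pw w -> (len y <= size w)%N.
Proof.
move=> E; rewrite /len; case: ex_minnP => m _ Hmin; apply: Hmin.
by apply/orP; left; apply/pbP; exists w.
Qed.

Lemma len_is y : expressible y -> length_is Pi y (len y).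
Proof.
move=> Hy; split; first by have [w [? ?]] := len_spec Hy; exists w.
by move=> w E; apply: len_min.
Qed.

Lemma length_is_len y k : length_is Pi y k -> k = len y.
Proof.
move=> [[w [Hw E]] Hmin]; apply/eqP; rewrite eqn_leq.
have [w' [Hw' E']] := len_spec (ex_intro _ w E).
by rewrite -{1}Hw' (Hmin w' E') -Hw (len_min E).
Qed.

Lemma length_is_expr y k : length_is Pi y k -> expressible y.
Proof. by move=> [[w [_ E]] _]; exists w. Qed.

Lemma len0 y : expressible y -> len y = 0%N -> y = 1%:M.
Proof.
move=> Hy H0; have [w [Hw ->]] := len_spec Hy.
by move: Hw; rewrite H0; case: w.
Qed.

Lemma len1 : len 1%:M = 0%N.
Proof. by apply/eqP; rewrite -leqn0 (@len_min _ [::]). Qed.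

Lemma expr_root y b : expressible y -> b \in Rt -> y *m b \in Rt.
Proof. by move=> [w ->] Hb'; apply: pw_root. Qed.

Lemma exchange b w : pos b -> pos (- ((pw w)^T *m b)) ->
  exists w1 i w2, w = w1 ++ i :: w2 /\ refl b *m pw w = pw (w1 ++ w2).
Proof.
elim: w b => [|i w IH] b Hb1 Hb2.
  by rewrite pw_nil trmx1 mul1mx in Hb2; case: (pos_neg Hb1 Hb2).
rewrite pw_cons trmx_mul refl_tr -mulmxA in Hb2.
have Hsb : s i *m b \in Rt := refl_in (Pi_in i) (pos_in Hb1).
case: (root_sign Hsb) => [Hp|Hn]; last first.
  by exists [::], i, w; split => //; rewrite (R1 Hb1 Hn) pw_cons mulmxA sK mul1mx.
have [w1 [j [w2 [Ew E]]]] := IH _ Hp Hb2.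
exists (i :: w1), j, w2; split; first by rewrite Ew.
have E2 : refl (s i *m b) = s i *m refl b *m s i.
  by rewrite refl_conj ?refl_tr //; apply: orth_s.
by rewrite cat_cons [RHS]pw_cons -E E2 (pw_cons _ i w) !mulmxA sK mul1mx.
Qed.

Lemma size_del (w1 w2 : seq 'I_l) i : (size (w1 ++ w2) < size (w1 ++ i :: w2))%N.
Proof. by rewrite !size_cat /= addnS. Qed.

Lemma len_lt b y : pos b -> expressible y -> pos (- (y^T *m b)) ->
  (len (refl b *m y) < len y)%N.
Proof.
move=> Hb1 Hy Hb2; have [w [Hw Ey]] := len_spec Hy; rewrite Ey in Hb2 *.
have [w1 [i [w2 [Ew E]]]] := exchange Hb1 Hb2.
rewrite E; apply: leq_ltn_trans (len_min (erefl _)) _.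
by rewrite -Ey -Hw Ew size_del.
Qed.

Lemma len_gt b y : pos b -> expressible y -> pos (y^T *m b) ->
  (len y < len (refl b *m y))%N.
Proof.
move=> Hb1 Hy Hb2; set y' := refl b *m y.
have Hy' : expressible y' := expr_mul (refl_expr Hb1) Hy.
have E : y = refl b *m y'.
  by rewrite /y' mulmxA reflK ?mul1mx // root_nz // (pos_in Hb1).
rewrite {1}E; apply: len_lt => //.
rewrite /y' trmx_mul refl_tr -mulmxA refl_root ?root_nz ?(pos_in Hb1) //.
by rewrite mulmxN opprK.
Qed.

Lemma pos_of a : a \in Rt -> exists2 b, pos b & refl a = refl b.
Proof.
move=> Ha; case: (root_sign Ha) => H; first by exists a.
by exists (- a) => //; rewrite reflN.
Qed.

Lemma len_refl_neq a y : a \in Rt -> expressible y -> len (refl a *m y) != len y.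
Proof.
move=> Ha Hy; have [b Hb1 ->] := pos_of Ha.
have Hr : y^T *m b \in Rt := expr_root (expr_tr Hy) (pos_in Hb1).
case: (root_sign Hr) => H.
  by rewrite gtn_eqF // len_gt.
by rewrite ltn_eqF // len_lt.
Qed.

Lemma len_lt_neg b y : pos b -> expressible y -> (len (refl b *m y) < len y)%N ->
  pos (- (y^T *m b)).
Proof.
move=> Hb1 Hy Hlt.
have Hr : y^T *m b \in Rt := expr_root (expr_tr Hy) (pos_in Hb1).
case: (root_sign Hr) => // H.
by have := len_gt Hb1 Hy H; rewrite ltnNge ltnW.
Qed.

Lemma len_s_ub i y : expressible y -> (len (s i *m y) <= (len y).+1)%N.
Proof.
move=> Hy; have [w [Hw Ey]] := len_spec Hy; rewrite {1}Ey -pw_cons.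
by apply: leq_trans (len_min (erefl _)) _; rewrite /= Hw.
Qed.

Lemma len_rs_ub i y : expressible y -> (len (y *m s i) <= (len y).+1)%N.
Proof.
move=> Hy; have [w [Hw Ey]] := len_spec Hy; rewrite {1}Ey -pw_rcons.
by apply: leq_trans (len_min (erefl _)) _; rewrite size_rcons Hw.
Qed.

Lemma expr_s i : expressible (s i).
Proof. by exists [:: i]; rewrite pw_cons pw_nil mulmx1. Qed.

Lemma rs_conj y j : expressible y -> y *m s j = refl (y *m Pi j) *m y.
Proof.
by move=> Hy; rewrite (refl_conj _ (expr_orth Hy)) -mulmxA (expr_orth Hy) mulmx1.
Qed.

Lemma len_rs i y : expressible y ->
  len (y *m s i) = (len y).+1 \/ len y = (len (y *m s i)).+1.
Proof.
move=> Hy; have Hy' : expressible (y *m s i) := expr_mul Hy (expr_s i).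
have H1 := len_rs_ub i Hy.
have H2 := len_rs_ub i Hy'; rewrite -mulmxA sK mulmx1 in H2.
have H3 : len (y *m s i) != len y.
  by rewrite rs_conj //; apply: len_refl_neq => //; apply: expr_root => //; apply: Pi_in.
case: (ltngtP (len (y *m s i)) (len y)) => H; last by rewrite H eqxx in H3.
  by right; apply/eqP; rewrite eqn_leq H2 H.
by left; apply/eqP; rewrite eqn_leq H1 H.
Qed.

Lemma len_ls i y : expressible y ->
  len (s i *m y) = (len y).+1 \/ len y = (len (s i *m y)).+1.
Proof.
move=> Hy; have Hy' : expressible (s i *m y) := expr_mul (expr_s i) Hy.
have H1 := len_s_ub i Hy.
have H2 := len_s_ub i Hy'; rewrite mulmxA sK mul1mx in H2.
have H3 : len (s i *m y) != len y by apply: len_refl_neq => //; apply: Pi_in.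
case: (ltngtP (len (s i *m y)) (len y)) => H; last by rewrite H eqxx in H3.
  by right; apply/eqP; rewrite eqn_leq H2 H.
by left; apply/eqP; rewrite eqn_leq H1 H.
Qed.

Lemma len_rs_gt y j : expressible y -> pos (y *m Pi j) -> (len y < len (y *m s j))%N.
Proof.
move=> Hy Hp; rewrite rs_conj //; apply: len_gt => //.
by rewrite mulmxA (expr_orth Hy) mul1mx; apply: pos_Pi.
Qed.

Lemma len_rs_lt y j : expressible y -> pos (- (y *m Pi j)) -> (len (y *m s j) < len y)%N.
Proof.
move=> Hy Hp; rewrite rs_conj // -reflN; apply: len_lt => //.
by rewrite mulmxN mulmxA (expr_orth Hy) mul1mx opprK; apply: pos_Pi.
Qed.

Lemma len_ls_gt y i : expressible y -> pos (y^T *m Pi i) -> (len y < len (s i *m y))%N.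
Proof. by move=> Hy Hp; apply: len_gt => //; apply: pos_Pi. Qed.

Lemma len_ls_lt y i : expressible y -> pos (- (y^T *m Pi i)) -> (len (s i *m y) < len y)%N.
Proof. by move=> Hy Hp; apply: len_lt => //; apply: pos_Pi. Qed.


Local Notation ble := (bruhat_le Rt Pi).
Local Notation bst := (bruhat_step Rt Pi).

Lemma step_of y a : expressible y -> a \in Rt -> (len y < len (refl a *m y))%N ->
  bst y (refl a *m y).
Proof.
move=> Hy Ha Hlt; exists a; split => //; split => //.
exists (len y), (len (refl a *m y)); split => //; apply: len_is => //.
exact: expr_mul (refl_expr_root Ha) Hy.
Qed.

Lemma step_inv u w : bst u w -> [/\ expressible u, expressible w,
  exists2 a, a \in Rt & w = refl a *m u & (len u < len w)%N].
Proof.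
case=> a [Ha [E [ku [kw [Hu Hw Hlt]]]]].
split; [exact: length_is_expr Hu | exact: length_is_expr Hw | by exists a | ].
by rewrite -(length_is_len Hu) -(length_is_len Hw).
Qed.

Lemma ble_expr x y : ble x y -> expressible y -> expressible x.
Proof.
elim=> [u w /step_inv [] //|//|x' y' z _ IH1 _ IH2 Hz].
exact: IH1 (IH2 Hz).
Qed.

Lemma le_rs y j : expressible y -> (len (y *m s j) < len y)%N -> ble (y *m s j) y.
Proof.
move=> Hy Hlt; set z := y *m s j.
have Hz : expressible z := expr_mul Hy (expr_s j).
have E : y = refl (z *m Pi j) *m z by rewrite -rs_conj // /z -mulmxA sK mulmx1.
rewrite {1}E; apply: rt_step; apply: step_of => //.
  by apply: expr_root => //; apply: Pi_in.
by rewrite -E.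
Qed.

Lemma le_rs' y j : expressible y -> (len y < len (y *m s j))%N -> ble y (y *m s j).
Proof.
move=> Hy Hlt; rewrite rs_conj //; apply: rt_step; apply: step_of => //.
  by apply: expr_root => //; apply: Pi_in.
by rewrite -rs_conj.
Qed.

Lemma subword_of x y : ble x y -> forall om, (exists2 sg, subseq sg om & y = pw sg) ->
  exists2 sg, subseq sg om & x = pw sg.
Proof.
elim=> [u w Hst|x'|x' y' z _ IH1 _ IH2] om H; last 2 first.
- done.
- by apply: IH1; apply: IH2.
case: (step_inv Hst) => Hu Hw [a Ha E] Hlt.
have [b Hb1 Eab] := pos_of Ha.
case: H => sg Hsg Ew.
have Hu' : u = refl b *m w.
  by rewrite E Eab mulmxA reflK ?mul1mx // root_nz // (pos_in Hb1).
have Hneg : pos (- (w^T *m b)) by apply: len_lt_neg => //; rewrite -Hu'.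
rewrite Ew in Hneg.
have [w1 [i [w2 [Esg E2]]]] := exchange Hb1 Hneg.
exists (w1 ++ w2); last by rewrite Hu' Ew E2.
apply: subseq_trans Hsg; rewrite Esg; apply: cat_subseq => //; exact: subseq_cons.
Qed.

Lemma lift_r x w j : ble x w -> expressible w ->
  ble (x *m s j) w \/ ble (x *m s j) (w *m s j).
Proof.
move=> Hle; elim: Hle => {x w} [u w Hst|x'|x' y' z Hxy IH1 Hyz IH2] Hw'; last 2 first.
- by right; apply: rt_refl.
- have Hy' := ble_expr Hyz Hw'.
  case: (IH1 Hy') => H1; first by left; apply: rt_trans H1 Hyz.
  by case: (IH2 Hw') => H2; [left|right]; apply: rt_trans H1 H2.
case: (step_inv Hst) => Hu Hw [a Ha E] Hlt.
case: (len_rs j Hu) => Hus; last first.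
  have H1 : ble (u *m s j) u by apply: le_rs => //; rewrite Hus.
  by left; apply: rt_trans H1 _; apply: rt_step.
have Hus' : expressible (u *m s j) := expr_mul Hu (expr_s j).
have Ews : w *m s j = refl a *m (u *m s j) by rewrite E mulmxA.
have Hne := len_refl_neq Ha Hus'; rewrite -Ews in Hne.
case: (ltngtP (len (u *m s j)) (len (w *m s j))) => H; last by rewrite H eqxx in Hne.
  by right; rewrite Ews; apply: rt_step; apply: step_of => //; rewrite -Ews.
left.
have Hws : expressible (w *m s j) := expr_mul Hw (expr_s j).
have Hw1 : len w = (len (w *m s j)).+1.
  case: (len_rs j Hw) => // Hw1; exfalso.
  by move: H Hlt; rewrite Hw1 Hus; move=> H1 H2; have := ltn_trans H2 (ltnSE H1); rewrite ltnn.
have Hwsu : len (w *m s j) = len u.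
  apply/eqP; rewrite eqn_leq -ltnS -Hus H /=.
  by rewrite -ltnS -Hw1.
have [rho [Hrho Erho]] := len_spec Hws.
have Ew : w = pw (rcons rho j) by rewrite pw_rcons -Erho -mulmxA sK mulmx1.
have [b Hb1 Eab] := pos_of Ha.
have Hu' : u = refl b *m w.
  by rewrite E Eab mulmxA reflK ?mul1mx // root_nz // (pos_in Hb1).
have Hneg : pos (- (w^T *m b)) by apply: len_lt_neg => //; rewrite -Hu'.
rewrite Ew in Hneg.
have [w1 [i [w2 [Esg E2]]]] := exchange Hb1 Hneg.
case/lastP: w2 Esg E2 => [|w2 k] Esg E2.
  rewrite cats1 in Esg; case/rcons_inj: Esg => Er _.
  have Eu : u = pw rho by rewrite Hu' Ew E2 cats0 Er.
  by rewrite Eu -Erho -mulmxA sK mulmx1; apply: rt_refl.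
rewrite -rcons_cons -rcons_cat in Esg; case/rcons_inj: Esg => Er Ejk.
exfalso.
have Eu : u *m s j = pw (w1 ++ w2).
  by rewrite Hu' Ew E2 -rcons_cat pw_rcons -Ejk -mulmxA sK mulmx1.
have := len_min Eu; rewrite Hus -Hwsu -Hrho Er !size_cat /= addnS ltnNge => /negP; apply; exact: leqnSn.

Qed.

Lemma subseq_rcons_cases (sg om : seq 'I_l) j : subseq sg (rcons om j) ->
  subseq sg om \/ exists2 sg', sg = rcons sg' j & subseq sg' om.
Proof.
rewrite -subseq_rev rev_rcons.
case E: (rev sg) => [|x t].
  move=> _; left; have -> : sg = [::] by rewrite -(revK sg) E.
  exact: sub0seq.
rewrite /=; case: eqP => [Ex | _] H.
  right; exists (rev t); first by rewrite -(revK sg) E rev_cons Ex.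
  by rewrite -subseq_rev revK.
by left; rewrite -subseq_rev E.
Qed.

Lemma subword_le om sg : len (pw om) = size om -> subseq sg om -> ble (pw sg) (pw om).
Proof.
elim/last_ind: om sg => [|om j IH] sg Hred Hsub.
  by move: Hsub; rewrite subseq0 => /eqP ->; apply: rt_refl.
have Hred' : len (pw om) = size om.
  apply/eqP; rewrite eqn_leq len_min //=.
  by have := len_rs_ub j (expr_pw om); rewrite -pw_rcons Hred size_rcons ltnS.
have Hstep : ble (pw om) (pw (rcons om j)).
  rewrite pw_rcons; apply: le_rs'; first exact: expr_pw.
  by rewrite -pw_rcons Hred Hred' size_rcons.
case: (subseq_rcons_cases Hsub) => [H|[sg' -> H]].
  by apply: rt_trans (IH _ Hred' H) Hstep.
rewrite pw_rcons; case: (lift_r j (IH _ Hred' H) (expr_pw om)) => H2.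
  by apply: rt_trans H2 Hstep.
by rewrite pw_rcons.
Qed.


Definition Wmin (nu : 'cV[R]_n) (x : 'M[R]_n) :=
  forall b, pos b -> dot nu b = 0 -> pos (x *m b).

Lemma fix_tr (y : 'M[R]_n) (v : 'cV[R]_n) : expressible y -> y *m v = v -> y^T *m v = v.
Proof. by move=> Hy E; rewrite -{1}E mulmxA (expr_orth Hy) mul1mx. Qed.

Lemma pw_fix (nu : 'cV[R]_n) w : all (fun j => dot nu (Pi j) == 0) w -> pw w *m nu = nu.
Proof.
elim: w => [|j w IH] /=; first by rewrite pw_nil mul1mx.
by case/andP => /eqP Hj Hall; rewrite pw_cons -mulmxA IH // refl_orth_fix // dotC.
Qed.

Lemma dom_Pi nu i : dominant Rt Pi nu -> 0 <= dot nu (Pi i).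
Proof. by case => _ H; apply: H; apply: pos_Pi. Qed.

Lemma Wmin_add nu x z : dominant Rt Pi nu -> expressible x -> Wmin nu x ->
  expressible z -> z *m nu = nu ->
  exists oz, [/\ all (fun j => dot nu (Pi j) == 0) oz, z = pw oz, size oz = len z &
     len (x *m z) = (len x + size oz)%N].
Proof.
move=> Hdom Hx Hmin.
suff: forall k z, (len z <= k)%N -> expressible z -> z *m nu = nu ->
  exists oz, [/\ all (fun j => dot nu (Pi j) == 0) oz, z = pw oz, size oz = len z &
     len (x *m z) = (len x + size oz)%N].
  by move=> H Hz Hzn; apply: (H _ z (leqnn _) Hz Hzn).
elim=> [|k IH] {}z Hk Hz Hzn.
  have H0 : len z = 0%N by apply/eqP; rewrite -leqn0.
  exists [::]; split; [done|by rewrite (len0 Hz H0)|by rewrite H0|].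
  by rewrite (len0 Hz H0) mulmx1 addn0.
have [o0 [Ho0 Eo0]] := len_spec Hz.
case/lastP: o0 Ho0 Eo0 => [|o' j] Ho0 Eo0.
  exists [::]; split; [done|exact: Eo0|exact: Ho0|].
  by rewrite Eo0 pw_nil mulmx1 addn0.
set z' := pw o'.
have Ez : z = z' *m s j by rewrite Eo0 pw_rcons.
have Hz' : expressible z' := expr_pw o'.
have Hlz' : (len z' <= size o')%N := len_min (erefl _).
have Hlz : len z = (len z').+1.
  case: (len_rs j Hz') => H; rewrite -Ez in H; first by [].
  by exfalso; move: Ho0 Hlz'; rewrite size_rcons H; lia.
have Hg : pos (z' *m Pi j).
  have Hr : z' *m Pi j \in Rt := expr_root Hz' (Pi_in j).
  case: (root_sign Hr) => // Hn; exfalso.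
  by have := len_rs_lt Hz' Hn; rewrite -Ez Hlz ltnNge leqnSn.
have Ezj : z *m Pi j = - (z' *m Pi j).
  rewrite Ez -mulmxA refl_root ?mulmxN //; exact: Pi_nz Hrs Hb j.
have Hdj : dot nu (Pi j) = 0.
  apply/eqP; rewrite eq_le dom_Pi // andbT.
  have : 0 <= dot nu (z' *m Pi j) by case: Hdom => _; apply.
  by rewrite -[z' *m Pi j]opprK -Ezj dotNr dotMr (fix_tr Hz Hzn) oppr_ge0.
have Hz'n : z' *m nu = nu.
  have -> : z' = z *m s j by rewrite Ez -mulmxA sK mulmx1.
  by rewrite -mulmxA refl_orth_fix ?Hzn // dotC.
have Hk' : (len z' <= k)%N by rewrite -ltnS -Hlz.
have [oz' [Hall Eoz' Hsz' Hlen']] := IH z' Hk' Hz' Hz'n.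
exists (rcons oz' j); split.
- by rewrite all_rcons Hdj eqxx Hall.
- by rewrite Ez Eoz' pw_rcons.
- by rewrite size_rcons Hsz' Hlz.
have Hxz' : expressible (x *m z') := expr_mul Hx Hz'.
have Hp : pos ((x *m z') *m Pi j).
  rewrite -mulmxA; apply: Hmin => //.
  by rewrite -[z' *m Pi j]opprK -Ezj dotNr dotMr (fix_tr Hz Hzn) Hdj oppr0.
have H1 := len_rs_gt Hxz' Hp.
have H2 := len_rs_ub j Hxz'.
rewrite Ez mulmxA size_rcons addnS -Hlen'; apply/eqP; rewrite eqn_leq H1 H2.
by [].
Qed.

Lemma minrep_Wmin nu x : expressible x ->
  (forall y, expressible y -> y *m nu = x *m nu -> (len x <= len y)%N) -> Wmin nu x.
Proof.
move=> Hx Hmin b Hb1 Hb0.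
have Hr : x *m b \in Rt := expr_root Hx (pos_in Hb1).
case: (root_sign Hr) => // Hn; exfalso.
set y := x *m refl b.
have Hy : expressible y := expr_mul Hx (refl_expr Hb1).
have Ey : y = refl (- (x *m b)) *m x.
  by rewrite reflN (refl_conj _ (expr_orth Hx)) -mulmxA (expr_orth Hx) mulmx1.
have Hlt : (len y < len x)%N.
  rewrite Ey; apply: len_lt => //.
  by rewrite mulmxN mulmxA (expr_orth Hx) mul1mx opprK.
have := Hmin y Hy.
rewrite /y -mulmxA refl_orth_fix; last by rewrite dotC.
by move/(_ erefl); rewrite leqNgt Hlt.
Qed.

Lemma Wmin_le nu x y : dominant Rt Pi nu -> expressible x -> Wmin nu x ->
  expressible y -> y *m nu = x *m nu ->
  (len x <= len y)%N /\ (len y = len x -> y = x).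
Proof.
move=> Hdom Hx Hmin Hy E.
set z := x^T *m y.
have Hz : expressible z := expr_mul (expr_tr Hx) Hy.
have Hzn : z *m nu = nu by rewrite /z -mulmxA E mulmxA (expr_orth Hx) mul1mx.
have Exz : x *m z = y by rewrite /z mulmxA (orthC (expr_orth Hx)) mul1mx.
have [oz [_ Eoz Hsz Hl]] := Wmin_add Hdom Hx Hmin Hz Hzn.
rewrite Exz in Hl; split; first by rewrite Hl leq_addr.
move=> Hyx; have H0 : size oz = 0%N by move: Hl; rewrite Hyx; lia.
by rewrite -Exz Eoz; case: oz {Eoz Hsz Hl} H0 => // _; rewrite pw_nil mulmx1.
Qed.

Lemma is_plus_W y eta : expressible y -> is_plus Rt Pi (y *m eta) = is_plus Rt Pi eta.
Proof.
move=> Hy; apply: functional_extensionality => nu; apply: propositional_extensionality.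
split => [[Hd [x Hx E]]|[Hd [x Hx E]]]; split => //.
  exists (x *m y); last by rewrite -mulmxA.
  by apply: expr_inW; apply: expr_mul (inW_expr Hx) Hy.
exists (x *m y^T); first by apply: expr_inW; apply: expr_mul (inW_expr Hx) (expr_tr Hy).
by rewrite -mulmxA (mulmxA y^T) (expr_orth Hy) mul1mx.
Qed.

Lemma lam_plus_W y eta : expressible y -> lam_plus Rt Pi (y *m eta) = lam_plus Rt Pi eta.
Proof. by move=> Hy; rewrite /lam_plus is_plus_W. Qed.

Lemma vbar_eq eta nu x : lam_plus Rt Pi eta = nu -> dominant Rt Pi nu ->
  expressible x -> Wmin nu x -> x *m nu = eta -> vbar Rt Pi eta = x.
Proof.
move=> Hlp Hdom Hx Hmin Ex.
have Hvx : is_vbar Rt Pi eta x.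
  split; [exact: expr_inW | by rewrite Hlp |].
  exists (len x); split; first exact: len_is.
  move=> w Hw Ew m Hm; rewrite (length_is_len Hm).
  apply: (Wmin_le Hdom Hx Hmin (inW_expr Hw) _).1.
  by rewrite -Hlp Ew Hlp Ex.
have Hv0 : is_vbar Rt Pi eta (vbar Rt Pi eta) :=
  epsilon_spec (inhabits 1%:M) (is_vbar Rt Pi eta) (ex_intro _ x Hvx).
case: Hv0 => Hv Ev [k [Hk Hkmin]].
have Hve : expressible (vbar Rt Pi eta) := inW_expr Hv.
rewrite (length_is_len Hk) in Hkmin.
have Exl : x *m lam_plus Rt Pi eta = eta by rewrite Hlp.
have H1 := Hkmin x (expr_inW Hx) Exl (len x) (len_is Hx).
rewrite Hlp in Ev.
have Evx : vbar Rt Pi eta *m nu = x *m nu by rewrite Ev Ex.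
have [H2 H3] := Wmin_le Hdom Hx Hmin Hve Evx.
by apply: H3; apply/eqP; rewrite eqn_leq H1 H2.
Qed.

Lemma minrep_ex nu eta : (exists y, expressible y /\ y *m nu = eta) ->
  exists x, [/\ expressible x, x *m nu = eta & Wmin nu x].
Proof.
move=> Hex.
have Hk : exists k, pb (exists y, [/\ expressible y, y *m nu = eta & len y = k]).
  by case: Hex => y [Hy E]; exists (len y); apply/pbP; exists y.
case: (ex_minnP Hk) => k /pbP [x [Hx Ex Hlx]] Hmin.
exists x; split => //; apply: minrep_Wmin => // y Hy Ey.
by rewrite Hlx; apply: Hmin; apply/pbP; exists y; split => //; rewrite Ey.
Qed.

Lemma subseq_cat_split (T : eqType) (sg o1 o2 : seq T) : subseq sg (o1 ++ o2) ->
  exists sg1 sg2, [/\ sg = sg1 ++ sg2, subseq sg1 o1 & subseq sg2 o2].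
Proof.
case/subseqP => m Hm ->.
exists (mask (take (size o1) m) o1), (mask (drop (size o1) m) o2); split.
- by rewrite -mask_cat ?cat_take_drop // size_takel // Hm size_cat leq_addr.
- exact: mask_subseq.
- exact: mask_subseq.
Qed.

Lemma stepG nu lam eta i v a : dominant Rt Pi nu ->
  expressible v -> Wmin nu v -> v *m nu = lam -> dot lam (Pi i) = 0 ->
  expressible a -> Wmin nu a -> a *m nu = eta -> ble a v ->
  exists c, [/\ expressible c, Wmin nu c, c *m nu = s i *m eta & ble c v].
Proof.
move=> Hdom Hv Hvm Ev Hli Ha Ham Ea Hav.
have [Hei|Hei] := eqVneq (dot eta (Pi i)) 0.
  by exists a; split => //; rewrite refl_orth_fix // dotC.
set c := s i *m a.
have Hc : expressible c := expr_mul (expr_s i) Ha.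
have Hcm : Wmin nu c.
  move=> b Hb1 Hb0.
  have Hab := Ham b Hb1 Hb0.
  have Hr : c *m b \in Rt := expr_root Hc (pos_in Hb1).
  case: (root_sign Hr) => // Hn; exfalso.
  rewrite /c -mulmxA in Hn.
  have [k k0 Ek] := R1c Hrs Hb Hab Hn.
  move/eqP: Hei; apply.
  have : dot nu b = dot eta (a *m b) by rewrite -Ea orth_dot //; exact: expr_orth Ha.
  by rewrite Hb0 Ek dotZr => /esym/eqP; rewrite mulf_eq0 (negPf k0) /= => /eqP.
have Hcn : c *m nu = s i *m eta by rewrite /c -mulmxA Ea.
exists c; split => //.
have Hvi : pos (v^T *m Pi i).
  have Hr : v^T *m Pi i \in Rt := expr_root (expr_tr Hv) (Pi_in i).
  case: (root_sign Hr) => // Hn; exfalso.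
  have H0 : dot nu (- (v^T *m Pi i)) = 0 by rewrite dotNr -dotMl Ev Hli oppr0.
  have := Hvm _ Hn H0; rewrite mulmxN mulmxA (orthC (expr_orth Hv)) mul1mx => Hneg.
  exact: pos_neg (pos_Pi i) Hneg.
have [ov [Hov Eov]] := len_spec Hv.
have Hsv : len (s i *m v) = size (i :: ov).
  have H1 := len_ls_gt Hv Hvi; have H2 := len_s_ub i Hv.
  by rewrite /= Hov; apply/eqP; rewrite eqn_leq H1 H2.
have Hsa : ble c (s i *m v).
  have [sg Hsg Esg] := subword_of Hav (ex_intro2 _ _ ov (subseq_refl ov) Eov).
  rewrite /c Esg -pw_cons Eov -pw_cons; apply: subword_le.
    by rewrite pw_cons -Eov Hsv.
  by rewrite /= eqxx.
set z := v^T *m (s i *m v).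
have Hz : expressible z := expr_mul (expr_tr Hv) (expr_mul (expr_s i) Hv).
have Hzn : z *m nu = nu.
  rewrite /z -!mulmxA Ev refl_orth_fix; last by rewrite dotC.
  by rewrite -Ev mulmxA (expr_orth Hv) mul1mx.
have Evz : v *m z = s i *m v by rewrite /z mulmxA (orthC (expr_orth Hv)) mul1mx.
have [oz [Hallz Eoz Hsz Hlvz]] := Wmin_add Hdom Hv Hvm Hz Hzn.
have Epw : s i *m v = pw (ov ++ oz) by rewrite pw_cat -Eov -Eoz Evz.
have [sg Hsg Esg] := subword_of Hsa (ex_intro2 _ _ (ov ++ oz) (subseq_refl _) Epw).
have [sg1 [sg2 [Esg12 Hs1 Hs2]]] := subseq_cat_split Hsg.
set a2 := pw sg1.
have Ha2v : ble a2 v.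
  by rewrite Eov; apply: subword_le => //; rewrite -Eov Hov.
have Hfix2 : pw sg2 *m nu = nu.
  by apply: pw_fix; apply/allP => j Hj; exact: (allP Hallz) j (mem_subseq Hs2 Hj).
have Ea2 : a2 *m nu = c *m nu by rewrite Esg Esg12 pw_cat -mulmxA Hfix2.
have Ha2 : expressible a2 := expr_pw sg1.
set z2 := c^T *m a2.
have Hz2 : expressible z2 := expr_mul (expr_tr Hc) Ha2.
have Hz2n : z2 *m nu = nu by rewrite /z2 -mulmxA Ea2 mulmxA (expr_orth Hc) mul1mx.
have Ecz2 : c *m z2 = a2 by rewrite /z2 mulmxA (orthC (expr_orth Hc)) mul1mx.
have [oz2 [_ Eoz2 _ Hlcz2]] := Wmin_add Hdom Hc Hcm Hz2 Hz2n.
have [oc [Hoc Eoc]] := len_spec Hc.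
have E' : a2 = pw (oc ++ oz2) by rewrite pw_cat -Eoc -Eoz2 Ecz2.
have Hca2 : ble c a2.
  rewrite E' {1}Eoc; apply: subword_le; last exact: prefix_subseq.
  by rewrite -E' -Ecz2 Hlcz2 size_cat Hoc.
exact: rt_trans Hca2 Ha2v.
Qed.


Definition spanI (I : {set 'I_l}) (b : 'cV[R]_n) :=
  exists d : 'I_l -> R, (forall m, m \notin I -> d m = 0) /\ b = \sum_m d m *: Pi m.

Lemma spanI_Pi (I : {set 'I_l}) (j : 'I_l) : j \in I -> spanI I (Pi j).
Proof.
move=> Hj; exists (fun m => if m == j then 1 else 0); split; last by rewrite sum_delta scale1r.
move=> m Hm; have : m != j by apply/eqP => Emj; rewrite Emj Hj in Hm.
by move/negPf ->.
Qed.

Lemma spanI_s (I : {set 'I_l}) (i : 'I_l) b : i \in I -> spanI I b -> spanI I (s i *m b).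
Proof.
move=> Hi [d [Hd ->]]; rewrite reflE.
set k := (_ * _)%R.
exists (fun m => d m - (if m == i then k else 0)); split.
  move=> m Hm; rewrite Hd //.
  have : m != i by apply/eqP => E; rewrite E Hi in Hm.
  by move/negPf ->; rewrite subr0.
rewrite [RHS](eq_bigr (fun m => d m *: Pi m - (if m == i then k else 0) *: Pi m));
  last by move=> m _; rewrite scalerBl.
by rewrite sumrB sum_delta.
Qed.

Lemma spanI_pw (I : {set 'I_l}) (w : seq 'I_l) b : all (mem I) w -> spanI I b -> spanI I (pw w *m b).
Proof.
elim: w => [|i w IH] /=; first by rewrite pw_nil mul1mx.
by case/andP => Hi Hall Hb'; rewrite pw_cons -mulmxA; apply: spanI_s => //; apply: IH.
Qed.

Lemma posrootI_of (I : {set 'I_l}) b : pos b -> spanI I b -> posrootI Rt Pi I b.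
Proof.
move=> [Hb1 [c Ec]] [d [Hd Ed]]; split => //; exists c; split => //.
move=> m Hm.
have E : \sum_i (c i)%:R *: Pi i = \sum_i d i *: Pi i by rewrite -Ec -Ed.
have := coef_unique E m; rewrite Hd // => /eqP; rewrite pnatr_eq0 => /eqP.
by [].
Qed.

Lemma WIlam_gen I lam w : PIplus Rt Pi I lam -> inWI Pi I w -> w *m lam = lam ->
  exists om, all (fun j => dot lam (Pi j) == 0) om /\ w = pw om.
Proof.
move=> [Hwt HI] [om0 Hom0 ->].
change (prodr (map Pi om0)) with (pw om0).
suff: forall k om, (size om <= k)%N -> all (mem I) om -> pw om *m lam = lam ->
    exists om', all (fun j => dot lam (Pi j) == 0) om' /\ pw om = pw om'.
  by move=> H E; apply: H (leqnn _) Hom0 E.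
elim=> [|k IH] om Hk HomI E.
  by case: om Hk HomI E => // _ _ _; exists [::].
case: (classic (exists om1, [/\ all (mem I) om1, pw om1 = pw om & (size om1 < size om)%N]))
  => [[om1 [H1 E1 Hs1]]|Hnmin].
  have Hk1 : (size om1 <= k)%N by rewrite -ltnS (leq_trans Hs1 Hk).
  have E1' : pw om1 *m lam = lam by rewrite E1.
  have [om' [Ha' E']] := IH om1 Hk1 H1 E1'.
  by exists om'; rewrite -E1.
case/lastP: om Hk HomI E Hnmin => [|o' j] Hk HomI E Hnmin.
  by exists [::].
rewrite all_rcons in HomI; case/andP: HomI => HjI Ho'I.
set y := pw o'.
have Hy : expressible y := expr_pw o'.
have Hw : pw (rcons o' j) = y *m s j by rewrite pw_rcons.
have Hg : pos (y *m Pi j).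
  have Hr : y *m Pi j \in Rt := expr_root Hy (Pi_in j).
  case: (root_sign Hr) => // Hn; exfalso; apply: Hnmin.
  have Hneg : pos (- ((pw o')^T *m - (y *m Pi j))).
    by rewrite mulmxN mulmxA (expr_orth Hy) mul1mx opprK; apply: pos_Pi.
  have [w1 [i [w2 [Eo' E2]]]] := exchange Hn Hneg.
  exists (w1 ++ w2); split.
  - by move: Ho'I; rewrite Eo' !all_cat /= => /andP [-> /andP [_ ->]].
  - by rewrite -E2 reflN Hw rs_conj.
  - by rewrite size_rcons Eo' ltnS ltnW // size_del.
have Ewj : pw (rcons o' j) *m Pi j = - (y *m Pi j).
  rewrite Hw -mulmxA refl_root ?mulmxN //; exact: Pi_nz Hrs Hb j.
have Hdj : dot lam (Pi j) = 0.
  apply/eqP; rewrite eq_le; apply/andP; split.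
  - have Hgi : posrootI Rt Pi I (y *m Pi j).
      by apply: posrootI_of => //; apply: spanI_pw => //; apply: spanI_Pi.
    have := HI _ Hgi.
    by rewrite -[y *m Pi j]opprK -Ewj dotNr dotMr (fix_tr (expr_pw _) E) oppr_ge0.
  - by apply: HI; apply: posrootI_of; [exact: pos_Pi | exact: spanI_Pi].
have Hyl : y *m lam = lam.
  have -> : y = pw (rcons o' j) *m s j by rewrite Hw -mulmxA sK mulmx1.
  by rewrite -mulmxA refl_orth_fix ?E // dotC.
have Hk' : (size o' <= k)%N by move: Hk; rewrite size_rcons ltnS.
have [om' [Ha' E']] := IH o' Hk' Ho'I Hyl.
exists (rcons om' j); split; first by rewrite all_rcons Hdj eqxx Ha'.
by rewrite Hw pw_rcons /y E'.
Qed.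

Lemma rho_ex : exists rho : 'cV[R]_n, forall i, dot (Pi i) rho = 1.
Proof.
pose A : 'M[R]_(l, n) := \matrix_(i, j) Pi i j 0.
have HrowA : forall i, row i A = (Pi i)^T.
  by move=> i; apply/matrixP => a b; rewrite !mxE (ord1 a).
have Hfree : row_free A.
  case Hf: (row_free A) => //; exfalso.
  have : kermx A != 0 by rewrite kermx_eq0 Hf.
  case/rowV0Pn => v /sub_kermxP Hv vnz.
  rewrite mulmx_sum_row in Hv.
  have H0 : \sum_i v 0 i *: Pi i = 0.
    have := congr1 trmx Hv; rewrite trmx0 linear_sum /= => E.
    apply: (etrans _ E).
    by apply: eq_bigr => i _; rewrite linearZ /= HrowA trmxK.
  apply: (negP vnz); apply/eqP/matrixP => a b; rewrite (ord1 a) mxE.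
  exact: (indep Hb H0 b).
have [B HB] := row_freeP Hfree.
exists (B *m const_mx 1) => i.
rewrite /dot -HrowA mulmxA -row_mul HB row1 -rowE mxE.
by rewrite mxE.
Qed.

Lemma dom_of nu : weight Rt nu -> (forall i, 0 <= dot nu (Pi i)) -> dominant Rt Pi nu.
Proof.
move=> Hw H; split => // a [_ [c ->]]; rewrite dot_sumr; apply: sumr_ge0 => i _.
by rewrite dotZr; apply: mulr_ge0 => //; exact: ler0n.
Qed.

Lemma weight_W y eta : expressible y -> weight Rt eta -> weight Rt (y *m eta).
Proof.
move=> Hy Hw a Ha; rewrite dotMl.
have Ha' : y^T *m a \in Rt := expr_root (expr_tr Hy) Ha.
have := Hw _ Ha'; rewrite orth_dot //; exact: orth_tr (expr_orth Hy).
Qed.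

Lemma int_neg (m : R) : m \is a Num.int -> m < 0 -> m <= -1.
Proof.
case/intrP => z -> Hz; rewrite ltrz0 in Hz.
have Hz' : (z <= -1)%R by lia.
by rewrite -(ler_int R) in Hz'.
Qed.

Lemma dom_exists eta : weight Rt eta -> exists x, expressible x /\ dominant Rt Pi (x *m eta).
Proof.
move=> Hw0.
have [rho Hrho] := rho_ex.
set B := (dot eta eta + dot rho rho) / 2.
have Hbound : forall e, dot e e = dot eta eta -> dot e rho <= B.
  move=> e Ee; have := dot_ge0 (e - rho).
  rewrite dotBl !dotBr (dotC rho e) Ee /B; lra.
suff: forall k e, weight Rt e -> dot e e = dot eta eta -> B - dot e rho < k%:R ->
    exists x, expressible x /\ dominant Rt Pi (x *m e).
  move=> H; apply: (H (Num.Def.archi_bound (B - dot eta rho))) => //.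
  by apply: archi_boundP; rewrite subr_ge0 Hbound.
elim=> [|k IH] e He Ee Hk.
  by exfalso; have := Hbound e Ee; move: Hk; rewrite mulr0n; lra.
case: (classic (forall i, 0 <= dot e (Pi i))) => Hall.
  by exists 1%:M; split; [exists [::] | rewrite mul1mx; apply: dom_of].
have [i Hi] : exists i, dot e (Pi i) < 0.
  apply: NNPP => Hn; apply: Hall => i; rewrite leNgt; apply/negP => Hi.
  by apply: Hn; exists i.
set m := 2 * dot e (Pi i) / dot (Pi i) (Pi i).
have Hm : m \is a Num.int := He _ (Pi_in i).
have Hd := dot_gt0 (Pi_nz Hrs Hb i).
have Hmneg : m < 0 by rewrite /m ltr_pdivrMr // mul0r; lra.
have Hm1 := int_neg Hm Hmneg.
set e' := s i *m e.
have Ee' : e' = e - m *: Pi i by rewrite /e' reflE /m dotC mulrAC.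
have He' : weight Rt e' := weight_W (expr_s i) He.
have Ee'2 : dot e' e' = dot eta eta by rewrite /e' orth_dot ?Ee //; apply: orth_s.
have Hk' : B - dot e' rho < k%:R.
  by rewrite Ee' dotBl dotZl Hrho mulr1; move: Hk; rewrite -natr1; lra.
have [x [Hx Hdx]] := IH e' He' Ee'2 Hk'.
exists (x *m s i); split; first exact: expr_mul Hx (expr_s i).
by rewrite -mulmxA.
Qed.

Lemma plus_spec eta : weight Rt eta -> is_plus Rt Pi eta (lam_plus Rt Pi eta).
Proof.
move=> Hw; have [x [Hx Hd]] := dom_exists Hw.
apply: (epsilon_spec (inhabits 0) (is_plus Rt Pi eta)).
by exists (x *m eta); split => //; exists x => //; apply: expr_inW.
Qed.

Lemma vbar_spec lam eta y : weight Rt lam -> expressible y -> y *m lam = eta ->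
  [/\ expressible (vbar Rt Pi eta), Wmin (lam_plus Rt Pi lam) (vbar Rt Pi eta) &
      vbar Rt Pi eta *m lam_plus Rt Pi lam = eta].
Proof.
move=> Hw Hy Ey.
have [Hdom [x Hx Ex]] := plus_spec Hw.
have Hex : exists y', expressible y' /\ y' *m lam_plus Rt Pi lam = eta.
  exists (y *m x^T); split; first exact: expr_mul Hy (expr_tr (inW_expr Hx)).
  by rewrite -mulmxA -Ex (mulmxA x^T) (expr_orth (inW_expr Hx)) mul1mx.
have [c [Hc Ec Hcm]] := minrep_ex Hex.
have Hlp : lam_plus Rt Pi eta = lam_plus Rt Pi lam by rewrite -Ey lam_plus_W.
by rewrite (vbar_eq Hlp Hdom Hc Hcm Ec).
Qed.

Lemma main_sec I lam mu : PIplus Rt Pi I lam -> weight Rt mu -> lt0 Rt Pi mu lam ->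
  forall w, inWI Pi I w -> w *m lam = lam -> lt0 Rt Pi (w *m mu) lam.
Proof.
move=> HPI Hmu [[HQ Hbr] Hne] w HwI Hwl.
have Hlam : weight Rt lam by case: HPI.
have Hwe : expressible w by case: HwI => om _ ->; exists om.
have Hlpw : lam_plus Rt Pi (w *m mu) = lam_plus Rt Pi mu := lam_plus_W mu Hwe.
split; last first.
  move=> E; apply: Hne.
  by rewrite -(fix_tr Hwe Hwl) -E mulmxA (expr_orth Hwe) mul1mx.
split; first by rewrite Hlpw.
rewrite Hlpw => Heq; have Hb0 := Hbr Heq.
have [Hdom [x Hx Ex]] := plus_spec Hlam.
have [_ [x' Hx' Ex']] := plus_spec Hmu.
rewrite Heq in Ex'.
have Hxx : expressible (x'^T *m x).
  by apply: expr_mul; [apply: expr_tr; apply: inW_expr | apply: inW_expr].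
have Exx : (x'^T *m x) *m lam = mu.
  by rewrite -mulmxA Ex -Ex' mulmxA (expr_orth (inW_expr Hx')) mul1mx.
have [om [Hom Ew]] := WIlam_gen HPI HwI Hwl.
have E0 : pw [::] *m lam = lam by rewrite pw_nil mul1mx.
have [Hv Hvm Ev] := vbar_spec Hlam (expr_pw [::]) E0.
rewrite Ew.
elim: om Hom {Ew} => [|j om IH] /=.
  by move=> _; rewrite pw_nil mul1mx.
case/andP => /eqP Hj Hom.
have IH' := IH Hom.
have Hy : expressible (pw om *m (x'^T *m x)) := expr_mul (expr_pw om) Hxx.
have Ey : (pw om *m (x'^T *m x)) *m lam = pw om *m mu by rewrite -mulmxA Exx.
have [Ha Ham Ea] := vbar_spec Hlam Hy Ey.
have [c [Hc Hcm Ec Hcv]] := stepG Hdom Hv Hvm Ev Hj Ha Ham Ea IH'.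
rewrite pw_cons -mulmxA.
have Hy2 : expressible (s j *m (pw om *m (x'^T *m x))) := expr_mul (expr_s j) Hy.
have Hlp : lam_plus Rt Pi (s j *m (pw om *m mu)) = lam_plus Rt Pi lam.
  by rewrite -Ey mulmxA lam_plus_W // -mulmxA; apply: expr_mul (expr_s j) Hy.
by rewrite (vbar_eq Hlp Hdom Hc Hcm Ec).
Qed.

End Lengths.

Theorem mainTheorem4 (R : realType) (n l : nat)
    (Rt : seq 'cV[R]_n) (Pi : 'I_l -> 'cV[R]_n) (I : {set 'I_l})
    (lam mu : 'cV[R]_n) :
  root_system Rt -> base Rt Pi ->
  PIplus Rt Pi I lam -> weight Rt mu ->
  lt0 Rt Pi mu lam ->
  forall w : 'M[R]_n, inWI Pi I w -> w *m lam = lam ->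
    lt0 Rt Pi (w *m mu) lam.
Proof. by move=> Hrs Hb; apply: main_sec. Qed.
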